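(* Let $i<j$ be two consecutive $c$-positions in a word $u$ (i.e. $u$ has label $c$ at $i$ and $j$ and no $c$ strictly between them) with attributes $(x_i,y_i)$ and $(x_j,y_j)$, respectively. If $x_j > x_i$, then $r^u_j = r^u_i \mathsf{X}_c$.
   Context: $A$ is a finite alphabet. An $\mathsf{X}$-ranker is a nonempty word over $\{\mathsf{X}_a : a\in A\}$, evaluated on a word $w$ by: $\mathsf{X}_a(w)$ is the smallest $a$-position of $w$ and $r\mathsf{X}_a(w)$ is the smallest $a$-position greater than $r(w)$ (possibly undefined); $\mathsf{Y}$-rankers are defined symmetrically with ''previous $a$-position''. The attribute of position $i$ is $(x_i,y_i)$, with $x_i$ the length of a shortest $\mathsf{X}$-ranker reaching $i$ and $y_i$ the length of a shortest $\mathsf{Y}$-ranker reaching $i$. Let $R^u_i$ be the set of $\mathsf{X}$-rankers $r$ with $r(u)=i$ and $|r|=x_i$. The canonical $\mathsf{X}$-ranker $r^u_i\in R^u_i$ is defined by minimizing visited positions from right to left: $S_{x_i}=R^u_i$, and for $j<x_i$, letting $p_j$ be the minimal position of $u$ visited by the length-$j$ prefixes of rankers in $S_{j+1}$, $S_j$ consists of the rankers in $S_{j+1}$ whose length-$j$ prefix visits $p_j$; then $S_1=\{r^u_i\}$. *)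

(* Defs.v *)
From mathcomp Require Import all_boot.
Set Implicit Arguments. Unset Strict Implicit. Unset Printing Implicit Defensive.

(* Words over a finite alphabet A are [seq A]; positions are 0-indexed nats. *)

Definition at_pos (A : finType) (u : seq A) (k : nat) (a : A) : bool :=
  (k < size u) && (nth a u k == a).

Definition nextX (A : finType) (u : seq A) (a : A) (k : nat) : option nat :=
  let s := drop k u in
  let q := index a s in
  if q < size s then Some (k + q) else None.

Fixpoint evalX_from (A : finType) (u : seq A) (k : nat) (r : seq A) : option nat :=
  match r with
  | [::] => None
  | a :: r' =>
      match nextX u a k with
      | None => None
      | Some p => if r' is [::] then Some p else evalX_from u p.+1 r'
      end
  end.

(* r(u) for an X-ranker r (a nonempty word over {X_a}); the empty word is not
   a ranker and evaluates to None. X_a(u) = smallest a-position,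
   r X_a (u) = smallest a-position > r(u). *)
Definition evalX (A : finType) (u : seq A) (r : seq A) : option nat :=
  evalX_from u 0 r.

Definition Rset (A : finType) (u : seq A) (i : nat) (r : seq A) : Prop :=
  evalX u r = Some i /\ (forall r', evalX u r' = Some i -> size r <= size r').

(* [xattr u i n] : n = x_i, the length of a shortest X-ranker reaching i. *)
Definition xattr (A : finType) (u : seq A) (i n : nat) : Prop :=
  exists r, Rset u i r /\ size r = n.

Definition posX (A : finType) (u : seq A) (r : seq A) : nat := odflt 0 (evalX u r).

(* [Sset u i d] is S_{x_i - d}: S_{x_i} = R^u_i and S_j consists of the rankers
   of S_{j+1} whose length-j prefix visits the minimal position p_j visited by
   length-j prefixes of rankers in S_{j+1}. (All rankers in R^u_i have
   length x_i, so j = size r - d.) *)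
Fixpoint Sset (A : finType) (u : seq A) (i : nat) (d : nat) (r : seq A) : Prop :=
  match d with
  | 0 => Rset u i r
  | d'.+1 =>
      Sset u i d' r /\
      (forall r', Sset u i d' r' ->
         posX u (take (size r - d) r) <= posX u (take (size r' - d) r'))
  end.

(* [canonical u i r] : r is the canonical X-ranker r^u_i, i.e. S_1 = {r}. *)
Definition canonical (A : finType) (u : seq A) (i : nat) (r : seq A) : Prop :=
  Sset u i (size r).-1 r.

(* Main.v *)
Require Import Defs.
From mathcomp Require Import all_boot zify.
Set Implicit Arguments. Unset Strict Implicit.

Lemma nextX_spec (A : finType) (u : seq A) a k p :
  nextX u a k = Some p ->
  [/\ k <= p, at_pos u p a & forall q, k <= q < p -> ~~ at_pos u q a].
Proof.
rewrite /nextX; set s := drop k u; case: ifP => // Hq [<-].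
have Hs : size s = size u - k by rewrite size_drop.
have Hin : a \in s by rewrite -index_mem.
split; first by rewrite leq_addr.
  rewrite /at_pos; apply/andP; split; first lia.
  have -> : nth a u (k + index a s) = nth a s (index a s) by rewrite /s nth_drop.
  by rewrite nth_index.
move=> q /andP [kq qp]; rewrite /at_pos; apply/negP => /andP [qu /eqP Hn].
have := @before_find _ a (pred1 a) s (q - k).
rewrite /s nth_drop subnKC //= Hn eqxx => H.
have : q - k < find (pred1 a) (drop k u) by rewrite -/s; move: qp; rewrite /index; lia.
by move/H.
Qed.

Lemma nextX_char (A : finType) (u : seq A) a k p :
  k <= p -> at_pos u p a -> (forall q, k <= q < p -> ~~ at_pos u q a) ->
  nextX u a k = Some p.
Proof.
move=> kp Hp Hm.
case E: (nextX u a k) => [p'|].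
  have [kp' Hp' Hm'] := @nextX_spec _ _ _ _ _ E.
  case: (ltngtP p p') => [H|H|->] //.
    by have := Hm' p; rewrite kp H Hp => /(_ isT).
  by have := Hm p'; rewrite kp' H Hp' => /(_ isT).
move: E; rewrite /nextX.
move: Hp; rewrite /at_pos => /andP [pu /eqP Hn].
have Hin : a \in drop k u.
  have -> : a = nth a (drop k u) (p - k) by rewrite nth_drop subnKC.
  by apply: mem_nth; rewrite size_drop -subSn //; exact: leq_sub2r.
by rewrite index_mem Hin.
Qed.

Lemma at_pos_uniq (A : finType) (u : seq A) p a b :
  at_pos u p a -> at_pos u p b -> a = b.
Proof.
rewrite /at_pos => /andP [pu /eqP Ha] /andP [_ /eqP Hb].
by rewrite -Ha -Hb (set_nth_default b a pu).
Qed.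

Lemma evalX_last (A : finType) (u : seq A) t a k q :
  evalX_from u k (rcons t a) = Some q -> at_pos u q a.
Proof.
elim: t k => [|b t IH] k /=.
  by case E: (nextX u a k) => [p|] // [<-]; case: (@nextX_spec _ _ _ _ _ E).
case: (nextX u b k) => [p|] //.
have : rcons t a != [::] by case: (t).
case E: (rcons t a) => [|x y] // _.
by rewrite -E; apply: IH.
Qed.

Lemma evalX_rcons (A : finType) (u : seq A) t a k :
  t != [::] ->
  evalX_from u k (rcons t a) = obind (fun q => nextX u a q.+1) (evalX_from u k t).
Proof.
elim: t k => [|b t IH] k // _ /=.
case: (nextX u b k) => [p|] //.
case: t IH => [|b' t'] IH /=; first by case: (nextX u a p.+1).
by rewrite -IH.
Qed.

Lemma evalX_prefix (A : finType) (u : seq A) s t k p :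
  s != [::] -> evalX_from u k (s ++ t) = Some p -> exists q, evalX_from u k s = Some q.
Proof.
elim: s k p => [|b s IH] k p // _ /=.
case: (nextX u b k) => [p0|] //.
case: s IH => [|b' s'] IH /=; first by eauto.
by move/IH; apply.
Qed.

Lemma Sset_Rset (A : finType) (u : seq A) i d r : Sset u i d r -> Rset u i r.
Proof. by elim: d r => [|d IH] r //= [/IH]. Qed.

Lemma Rset_size (A : finType) (u : seq A) i r r' :
  Rset u i r -> Rset u i r' -> size r = size r'.
Proof.
move=> [E H] [E' H']; apply/eqP; rewrite eqn_leq; apply/andP; split.
  exact: H. exact: H'.
Qed.

Lemma posX_eq (A : finType) (u : seq A) s p : evalX u s = Some p -> posX u s = p.
Proof. by rewrite /posX => ->. Qed.

Lemma take_rcons' (T : Type) (s : seq T) (c : T) m :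
  m <= size s -> take m (rcons s c) = take m s.
Proof. by move=> H; rewrite -cats1 takel_cat. Qed.

Lemma Sset_pos (A : finType) (u : seq A) i d r r' :
  Sset u i d r -> Sset u i d r' ->
  forall m, size r - d <= m <= size r -> posX u (take m r) = posX u (take m r').
Proof.
have Hsz : Sset u i d r -> Sset u i d r' -> size r = size r'.
  by move=> /Sset_Rset H /Sset_Rset H'; apply: Rset_size H H'.
elim: d Hsz => [|d IH] Hsz /=.
  move=> Sr Sr' m Hm.
  have -> : m = size r by lia.
  rewrite {2}(Hsz Sr Sr') !take_size.
  by rewrite (posX_eq Sr.1) (posX_eq Sr'.1).
move=> [Sr Hr] [Sr' Hr'] m Hm.
have Hsz' := Rset_size (Sset_Rset Sr) (Sset_Rset Sr').
case: (leqP (size r - d) m) => Hm2.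
  apply: (IH (fun _ _ => Hsz') Sr Sr').
  by rewrite Hm2; case/andP: Hm.
have -> : m = size r - d.+1 by lia.
apply/eqP; rewrite eqn_leq; apply/andP; split.
  by have := Hr r' Sr'; rewrite -Hsz'.
by have := Hr' r Sr; rewrite -Hsz'.
Qed.

Lemma canon_uniq (A : finType) (u : seq A) i r r' :
  canonical u i r -> canonical u i r' -> r = r'.
Proof.
rewrite /canonical => Cr Cr'.
have Rr := Sset_Rset Cr; have Rr' := Sset_Rset Cr'.
have Hsz := Rset_size Rr Rr'.
case: r Cr Rr Hsz => [|a0 r0] Cr Rr Hsz; first by case: Rr.
set r := a0 :: r0 in Cr Rr Hsz *.
rewrite -Hsz in Cr'.
have Hpos := Sset_pos Cr Cr'.
suff H : forall m, m <= size r -> take m r = take m r'.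
  by rewrite -(take_size r) H // Hsz take_size.
elim=> [|m IH] Hm; first by rewrite !take0.
have Hm' : m < size r by [].
rewrite (take_nth a0 Hm') (take_nth a0 (n:=m) (s:=r')); last by rewrite -Hsz.
rewrite IH; last exact: ltnW.
have [q Eq] : exists q, evalX u (take m.+1 r) = Some q.
  case: Rr => Er _; move: Er; rewrite -{1}(cat_take_drop m.+1 r) /evalX.
  apply: evalX_prefix; by rewrite -size_eq0 size_takel.
have [q' Eq'] : exists q, evalX u (take m.+1 r') = Some q.
  case: Rr' => Er _; move: Er; rewrite -{1}(cat_take_drop m.+1 r') /evalX.
  apply: evalX_prefix; by rewrite -size_eq0 size_takel // -Hsz.
have Hqq : q = q'.
  rewrite -(posX_eq Eq) -(posX_eq Eq'); apply: Hpos.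
  by move: Hm; rewrite /= subSnn => ->.
move: Eq Eq'; rewrite (take_nth a0 Hm') (take_nth a0 (n:=m) (s:=r')) -?Hsz // IH; last exact: ltnW.
rewrite /evalX => /evalX_last H1 /evalX_last H2.
by congr rcons; apply: at_pos_uniq H1 _; rewrite Hqq.
Qed.

Theorem lemma6 (A : finType) (u : seq A) (c : A) (i j xi xj : nat) :
  i < j ->
  at_pos u i c -> at_pos u j c ->
  (forall k, i < k < j -> ~~ at_pos u k c) ->
  xattr u i xi -> xattr u j xj -> xi < xj ->
  forall ri rj, canonical u i ri -> canonical u j rj -> rj = rcons ri c.
Proof.
move=> ij Hi Hj Hgap [r0 [R0 S0]] [rj0 [Rj0 Sj0]] Hx ri rj Ci Cj.
have Rri := Sset_Rset Ci.
have Szri : size ri = xi by rewrite -S0; apply: Rset_size Rri R0.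
have Szi : forall s, Rset u i s -> size s = xi.
  by move=> s Rs; rewrite -Szri; apply: Rset_size Rs Rri.
have Szj : forall s, Rset u j s -> size s = xj.
  by move=> s Rs; rewrite -Sj0; apply: Rset_size Rs Rj0.
have ri0 : ri != [::] by case: (ri) Rri => [[]|].
have xi0 : 0 < xi by rewrite -Szri lt0n size_eq0.
have Hnext : nextX u c i.+1 = Some j.
  by apply: nextX_char => // q /andP [q1 q2]; apply: Hgap; rewrite q1 q2.
have Hge : forall p, nextX u c p.+1 = Some j -> i <= p.
  move=> p /nextX_spec [p1 p2 p3]; rewrite leqNgt; apply/negP => pi.
  by have := p3 i; rewrite pi ij Hi => /(_ isT).
have Ers : forall s, s != [::] -> evalX u s = Some i -> evalX u (rcons s c) = Some j.
  by move=> s s0 Es; rewrite /evalX evalX_rcons // -/(evalX u s) Es.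
have Hxj : xj = xi.+1.
  apply/eqP; rewrite eqn_leq Hx andbT -Szri -Sj0 -(size_rcons ri c).
  by apply: Rj0.2; apply: Ers => //; case: Rri.
have RJ : forall r, Rset u j r -> exists s p, [/\ r = rcons s c, size s = xi,
                    evalX u s = Some p & i <= p].
  move=> r Rr; have Sr := Szj r Rr; case: Rr => Er _.
  case/lastP: r Sr Er => [|s a]; first by rewrite Hxj.
  rewrite size_rcons Hxj => -[Ss] Er.
  have Ea := evalX_last Er.
  have Eac : a = c by apply: at_pos_uniq Ea Hj.
  subst a.
  have s0 : s != [::] by rewrite -size_eq0 Ss -lt0n.
  move: Er; rewrite /evalX evalX_rcons // -/(evalX u s).
  case Es: (evalX u s) => [p|] //= En.
  by exists s, p; split => //; apply: Hge.
have Rj_of : forall s, Rset u i s -> Rset u j (rcons s c).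
  move=> s Rs; split.
    apply: Ers; last by case: Rs.
    by rewrite -size_eq0 (Szi s Rs) -lt0n.
  by move=> r' Er'; rewrite size_rcons (Szi s Rs) -Hxj -Sj0; apply: Rj0.2.
have Equiv : forall d r, Sset u j d.+1 r <-> exists s, r = rcons s c /\ Sset u i d s.
  elim=> [|d IH] r.
    split.
      move=> [Rr H]; have [s [p [Er Ss Es ip]]] := RJ r Rr.
      exists s; split => //=.
      have := H _ (Rj_of _ Rri).
      rewrite Er !size_rcons !subn1 /= !take_rcons' // !take_size.
      rewrite (posX_eq Es) (posX_eq Rri.1) => pi.
      have pe : p = i by apply/eqP; rewrite eqn_leq pi ip.
      subst p; split => // r'' E''.
      by rewrite Ss -Szri; apply: Rri.2.
    move=> [s [-> /= Rs]]; split; first exact: Rj_of.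
    move=> r' Rr'; have [s' [p [Er Ss Es ip]]] := RJ r' Rr'.
    rewrite Er !size_rcons !subn1 /= !take_rcons' // !take_size.
    by rewrite (posX_eq Es) (posX_eq Rs.1).
  split.
    move=> [/IH [s [Er Ss]] H]; exists s; split => //=; split => // s' Ss'.
    have := H _ (proj2 (IH _) (ex_intro _ s' (conj erefl Ss'))).
    rewrite Er !size_rcons !subSS !take_rcons' //; exact: leq_subr.
  move=> [s [Er [Ss H]]]; split; first by apply/IH; exists s.
  move=> r' /IH [s' [Er' Ss']].
  rewrite Er Er' !size_rcons !subSS !take_rcons' ?leq_subr //; exact: H.
have Rrj := Sset_Rset Cj.
have Szrj := Szj rj Rrj.
move: Cj; rewrite /canonical Szrj Hxj /= -(prednK xi0).
move=> /Equiv [s [Er Ss]]; subst rj.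
congr rcons; apply: (canon_uniq _ Ci); rewrite /canonical.
by rewrite (Szi s (Sset_Rset Ss)).
Qed.
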